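(* Let $a>0$ and let $f:(a,\infty)\to\mathbb{R}$ be real analytic and not identically zero. Let $\mathcal I=\{x\in(a,\infty):f(x)=0\}$. Assume that: (1) as $x\to a$ we have $\kappa(f,x)\to\infty$, and for every sequence $x_j\in(a,\infty)$ with $x_j\to\infty$ and $\mathrm{dist}(x_j,\mathcal I)\to0$ we have $\kappa(f,x_j)\to\infty$; (2) both as $x\to a$ and as $x\to\infty$ we have $\limsup|H(f,x)|\leq C$ for some constant $C>0$, where $H(f,x)=\frac{x^2f(x)f''(x)}{f(x)^2+x^2f'(x)^2}$. The part of this hypothesis concerning $x\to a$ is automatically satisfied if $f$ admits an analytic extension to $(a-\epsilon,\infty)$ for some $\epsilon>0$. Then $f$ is amenable.
   Context: Relative distance on $\mathbb{R}$: $\mathrm{dist}(x,y)=0$ if $x=y=0$, $\mathrm{dist}(x,y)=|\log(y/x)|$ if $xy>0$, and $\mathrm{dist}(x,y)=\infty$ otherwise; for a set $S$, $\mathrm{dist}(x,S)=\inf_{s\in S}\mathrm{dist}(x,s)$. For a real analytic function $f$ on an open set $\Omega\subseteq\mathbb{R}$, not identically zero, the condition number is $\kappa(f,x)=0$ if $x=0$, $\kappa(f,x)=\infty$ if $x\neq0$ and $f(x)=0$, and $\kappa(f,x)=|x|\,|f'(x)|/|f(x)|$ otherwise; set $\mu(f,x)=1+\kappa(f,x)$. The function $f:\Omega\to\mathbb{R}$ is called amenable if there is a constant $C>0$ such that for every $x\in\Omega$ with $\kappa(f,x)<\infty$, the set $B_x=\{y\in\mathbb{R}:\mathrm{dist}(y,x)<1/(C\mu(f,x))\}$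 is contained in $\Omega$, and $\mu(f,y)\leq C\mu(f,x)$ for all $y\in B_x$. *)

(* Defs.v *)
From Stdlib Require Import Reals.
From Coquelicot Require Import Coquelicot.
Open Scope R_scope.

Definition rdist (x y : R) : Rbar :=
  if Req_EM_T x 0 then (if Req_EM_T y 0 then Finite 0 else p_infty)
  else if Rlt_dec 0 (x * y) then Finite (Rabs (ln (y / x))) else p_infty.

(* "dist(x, S) < e" unfolded: inf_{s in S} dist(x,s) < e  <->  some s in S has dist(x,s) < e. *)
Definition rdist_set_lt (x : R) (S : R -> Prop) (e : R) : Prop :=
  exists s, S s /\ Rbar_lt (rdist x s) (Finite e).

Definition real_analytic_on (Om : R -> Prop) (f : R -> R) : Prop :=
  forall x0, Om x0 -> exists r, 0 < r /\ exists c : nat -> R,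
    forall x, Om x -> Rabs (x - x0) < r -> is_pseries c (x - x0) (f x).

Definition kappa (f : R -> R) (x : R) : Rbar :=
  if Req_EM_T x 0 then Finite 0
  else if Req_EM_T (f x) 0 then p_infty
  else Finite (Rabs x * Rabs (Derive f x) / Rabs (f x)).

Definition mu (f : R -> R) (x : R) : Rbar := Rbar_plus (Finite 1) (kappa f x).

Definition amenable (Om : R -> Prop) (f : R -> R) : Prop :=
  exists C, 0 < C /\
    forall x k, Om x -> kappa f x = Finite k ->
      (forall y, Rbar_lt (rdist y x) (Finite (1 / (C * (1 + k)))) -> Om y) /\
      (forall y, Rbar_lt (rdist y x) (Finite (1 / (C * (1 + k)))) ->
                 Rbar_le (mu f y) (Finite (C * (1 + k)))).

Definition Hden (f : R -> R) (x : R) : R := (f x)^2 + x^2 * (Derive f x)^2.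
Definition Hf (f : R -> R) (x : R) : R := x^2 * f x * Derive_n f 2 x / Hden f x.

(* Main.v *)
Require Import Defs.
From Stdlib Require Import Reals Lra Lia Classical.
From Coquelicot Require Import Coquelicot.
Open Scope R_scope.

Lemma bounded_of_tail (u : nat -> R) : forall N B,
  (forall n, (N <= n)%nat -> Rabs (u n) <= B) -> exists M, forall n, Rabs (u n) <= M.
Proof.
  induction N as [|N IH]; intros B HB.
  - exists B; intros n; apply HB; lia.
  - apply (IH (Rmax B (Rabs (u N)))). intros n Hn.
    destruct (Nat.eq_dec n N) as [->|Hne].
    + apply Rmax_r.
    + eapply Rle_trans; [apply HB; lia | apply Rmax_l].
Qed.

Lemma bounded_of_lim0 (u : nat -> R) : is_lim_seq u 0 -> exists M, forall n, Rabs (u n) <= M.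
Proof.
  intros H.
  assert (H1 : eventually (fun n => Rabs (u n - 0) < 1)).
  { apply is_lim_seq_spec in H. apply (H (mkposreal 1 Rlt_0_1)). }
  destruct H1 as [N HN].
  apply (bounded_of_tail u N 1). intros n Hn. specialize (HN n Hn).
  rewrite Rminus_0_r in HN; lra.
Qed.

Lemma cv_radius_ge (c : nat -> R) (rho : R) : 0 < rho ->
  (forall y, Rabs y < rho -> ex_pseries c y) -> Rbar_le rho (CV_radius c).
Proof.
  intros Hr Hc.
  destruct (CV_radius_bounded c) as [Hub _].
  assert (Hy : forall y, 0 <= y < rho -> Rbar_le y (CV_radius c)).
  { intros y Hy. apply Hub.
    assert (He : ex_pseries c y) by (apply Hc; rewrite Rabs_pos_eq; lra).
    apply ex_pseries_R in He. apply ex_series_lim_0 in He.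
    apply bounded_of_lim0 in He. exact He. }
  destruct (CV_radius c) as [r| |] eqn:E; simpl.
  - destruct (Rle_dec rho r) as [h|h]; auto.
    assert (Hr0 : Rbar_le 0 (CV_radius c)) by apply CV_radius_ge_0.
    rewrite E in Hr0; simpl in Hr0.
    specialize (Hy ((r + rho)/2)). simpl in Hy. lra.
  - exact I.
  - specialize (Hy 0). simpl in Hy. apply Hy. lra.
Qed.

Lemma locally_of_ball (P : R -> Prop) (x e : R) : 0 < e ->
  (forall y, Rabs (y - x) < e -> P y) -> locally x P.
Proof.
  intros He H. exists (mkposreal e He). intros y Hy. apply H. exact Hy.
Qed.

Lemma is_derive_ps_shift (c : nat -> R) (z x : R) :
  Rbar_lt (Rabs (x - z)) (CV_radius c) ->
  is_derive (fun t => PSeries c (t - z)) x (PSeries (PS_derive c) (x - z)).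
Proof.
  intros H.
  assert (H1 : is_derive (fun t => t - z) x 1).
  { auto_derive; auto; ring. }
  pose proof (is_derive_comp (PSeries c) (fun t => t - z) x _ _ (is_derive_PSeries c (x - z) H) H1) as H2.
  unfold scal in H2; simpl in H2; unfold mult in H2; simpl in H2. rewrite Rmult_1_l in H2. exact H2.
Qed.

Lemma ball_tri (x z t rho : R) : Rabs (x - z) < rho -> Rabs (t - x) < rho - Rabs (x - z) -> Rabs (t - z) < rho.
Proof.
  intros H1 H2. replace (t - z) with ((t - x) + (x - z)) by ring.
  eapply Rle_lt_trans; [apply Rabs_triang|]. lra.
Qed.

Lemma loc_ps (a : R) (f : R -> R) (z : R) : real_analytic_on (fun x => a < x) f -> a < z ->
 exists rho c, 0 < rho /\ Rbar_le rho (CV_radius c) /\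
  forall x, Rabs (x - z) < rho -> a < x /\ f x = PSeries c (x - z) /\
    Derive f x = PSeries (PS_derive c) (x - z) /\
    Derive_n f 2 x = PSeries (PS_derive (PS_derive c)) (x - z) /\
    is_derive f x (Derive f x) /\ is_derive (Derive f) x (Derive_n f 2 x).
Proof.
  intros Han Hz.
  destruct (Han z Hz) as [r [Hr [c Hc]]].
  set (rho := Rmin r (z - a)).
  assert (Hrho : 0 < rho) by (apply Rmin_pos; lra).
  assert (Hrr : rho <= r) by apply Rmin_l.
  assert (Hra : rho <= z - a) by apply Rmin_r.
  assert (Hax : forall x, Rabs (x - z) < rho -> a < x).
  { intros x Hx. apply Rabs_def2 in Hx. lra. }
  assert (Hin : forall x, Rabs (x - z) < rho -> f x = PSeries c (x - z)).
  { intros x Hx. symmetry. apply is_pseries_unique. apply Hc; [apply Hax; auto| lra]. }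
  assert (Hrad : Rbar_le rho (CV_radius c)).
  { apply cv_radius_ge; auto. intros y Hy. exists (f (z + y)).
    assert (H : is_pseries c ((z + y) - z) (f (z + y))).
    { apply Hc.
      - apply Hax. replace (z + y - z) with y by ring. auto.
      - replace (z + y - z) with y by ring. lra. }
    replace (z + y - z) with y in H by ring. exact H. }
  assert (Hlt : forall x, Rabs (x - z) < rho -> Rbar_lt (Rabs (x - z)) (CV_radius c)).
  { intros x Hx. eapply Rbar_lt_le_trans; [|exact Hrad]. exact Hx. }
  assert (Hd1 : forall x, Rabs (x - z) < rho -> is_derive f x (PSeries (PS_derive c) (x - z))).
  { intros x Hx. apply (is_derive_ext_loc (fun t => PSeries c (t - z))).
    - apply (locally_of_ball _ x (rho - Rabs (x - z))); [lra|].
      intros t Ht. symmetry. apply Hin. eapply ball_tri; eauto.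
    - apply is_derive_ps_shift. auto. }
  assert (HD1 : forall x, Rabs (x - z) < rho -> Derive f x = PSeries (PS_derive c) (x - z)).
  { intros x Hx. apply is_derive_unique. auto. }
  assert (Hd2 : forall x, Rabs (x - z) < rho -> is_derive (Derive f) x (PSeries (PS_derive (PS_derive c)) (x - z))).
  { intros x Hx. apply (is_derive_ext_loc (fun t => PSeries (PS_derive c) (t - z))).
    - apply (locally_of_ball _ x (rho - Rabs (x - z))); [lra|].
      intros t Ht. symmetry. apply HD1. eapply ball_tri; eauto.
    - apply is_derive_ps_shift. rewrite CV_radius_derive. auto. }
  exists rho, c. split; [auto|]. split; [auto|].
  intros x Hx.
  assert (E2 : Derive_n f 2 x = PSeries (PS_derive (PS_derive c)) (x - z)).
  { change (Derive (Derive f) x = PSeries (PS_derive (PS_derive c)) (x - z)).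
    apply is_derive_unique. auto. }
  split; [auto|]. split; [auto|]. split; [auto|]. split; [auto|]. split.
  - rewrite HD1; auto.
  - rewrite E2. auto.
Qed.

Lemma abs_div_le (n d d' : R) : 0 < d' -> d' <= d -> Rabs (n / d) <= Rabs (n / d').
Proof.
  intros H1 H2. unfold Rdiv. rewrite !Rabs_mult.
  apply Rmult_le_compat_l; [apply Rabs_pos|].
  rewrite !Rabs_inv. rewrite (Rabs_pos_eq d) by lra. rewrite (Rabs_pos_eq d') by lra.
  apply Rinv_le_contravar; lra.
Qed.

Lemma H_alg1 (x F F1 F2 : R) : F <> 0 ->
  Rabs (x^2*F*F2/(F^2 + x^2*F1^2)) <= x^2 * Rabs F2 / Rabs F.
Proof.
  intros HF.
  assert (h0 : 0 < F^2) by (apply pow2_gt_0; auto).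
  eapply Rle_trans; [apply (abs_div_le _ _ (F^2)); auto|].
  - assert (0 <= x^2*F1^2) by (apply Rmult_le_pos; apply pow2_ge_0). lra.
  - replace (x ^ 2 * F * F2 / F ^ 2) with (x^2 * F2 / F) by (field; auto).
    unfold Rdiv. rewrite !Rabs_mult, Rabs_inv. rewrite (Rabs_pos_eq (x^2)) by apply pow2_ge_0. lra.
Qed.

Lemma H_alg2 (x s P F F1 F2 G0 G1 G2 : R) : 0 < x -> s <> 0 -> P <> 0 ->
  F = P*G0 -> s*F1 = P*G1 -> s^2*F2 = P*G2 -> G1 <> 0 ->
  Rabs (x^2*F*F2/(F^2 + x^2*F1^2)) <= Rabs G0 * Rabs G2 / G1^2.
Proof.
  intros Hx Hs HP E0 E1 E2 HG1.
  assert (EF1 : F1 = P*G1/s) by (apply (Rmult_eq_reg_l s); auto; rewrite E1; field; auto).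
  assert (EF2 : F2 = P*G2/s^2) by (apply (Rmult_eq_reg_l (s^2)); [|apply pow_nonzero; auto]; rewrite E2; field; auto).
  assert (HF1 : F1 <> 0).
  { rewrite EF1. unfold Rdiv. apply Rmult_integral_contrapositive_currified; [apply Rmult_integral_contrapositive_currified; auto|apply Rinv_neq_0_compat; auto]. }
  assert (h0 : 0 < x^2*F1^2) by (apply Rmult_lt_0_compat; apply pow2_gt_0; lra).
  eapply Rle_trans; [apply (abs_div_le _ _ (x^2*F1^2)); auto|].
  - assert (0 <= F^2) by apply pow2_ge_0. lra.
  - replace (x ^ 2 * F * F2 / (x^2*F1 ^ 2)) with (G0 * G2 / G1^2).
    + unfold Rdiv. rewrite !Rabs_mult, Rabs_inv. rewrite (Rabs_pos_eq (G1^2)) by apply pow2_ge_0. lra.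
    + rewrite E0, EF1, EF2. field. repeat split; auto. lra.
Qed.

Lemma cont_eps (g : R -> R) (x eps : R) : continuity_pt g x -> 0 < eps ->
  exists d, 0 < d /\ forall y, Rabs (y - x) < d -> Rabs (g y - g x) < eps.
Proof.
  intros Hc He. destruct (Hc eps He) as [d [Hd H]].
  exists d. split; auto. intros y Hy.
  destruct (Req_dec y x) as [->|Hne].
  - rewrite Rminus_diag, Rabs_R0. auto.
  - apply (H y). split; [split; [exact I| auto]| exact Hy].
Qed.

Lemma CV_radius_decr_n (c : nat -> R) (n : nat) : CV_radius (PS_decr_n c n) = CV_radius c.
Proof.
  induction n as [|n IH].
  - apply CV_radius_ext. intros k. reflexivity.
  - rewrite <- IH. rewrite <- (CV_radius_decr_1 (PS_decr_n c n)).
    apply CV_radius_ext. intros k. unfold PS_decr_n, PS_decr_1. f_equal. lia.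
Qed.

Lemma least_nz (c : nat -> R) : (exists n, c n <> 0) ->
  exists m, c m <> 0 /\ forall k, (k < m)%nat -> c k = 0.
Proof.
  intros [n Hn]. apply NNPP. intros H.
  assert (A : forall p k, (k < p)%nat -> c k = 0).
  { induction p as [|p IH]; intros k Hk; [lia|].
    destruct (Nat.eq_dec k p) as [->|Hne].
    - apply NNPP. intros Hp. apply H. exists p. split; auto.
    - apply IH. lia. }
  apply Hn. apply (A (S n)). lia.
Qed.

Lemma Hf_zero (f : R -> R) (x : R) : f x = 0 -> Hf f x = 0.
Proof. intros H. unfold Hf. rewrite H. unfold Rdiv. ring. Qed.

Lemma rad_lt (c : nat -> R) (rho s : R) : Rbar_le rho (CV_radius c) -> Rabs s < rho ->
  Rbar_lt (Rabs s) (CV_radius c).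
Proof. intros H1 H2. eapply Rbar_lt_le_trans; [|exact H1]. exact H2. Qed.

Lemma ps_near (c : nat -> R) (rho eps : R) : Rbar_le rho (CV_radius c) -> 0 < rho -> 0 < eps ->
  exists d, 0 < d /\ forall s, Rabs s < d -> Rabs (PSeries c s - c O) < eps.
Proof.
  intros Hr Hrho He.
  assert (Hc : continuity_pt (PSeries c) 0).
  { apply PSeries_continuity. apply (rad_lt _ rho); auto. rewrite Rabs_R0; auto. }
  destruct (cont_eps _ _ _ Hc He) as [d [Hd H]].
  exists d. split; auto. intros s Hs. rewrite <- (PSeries_0 c). apply H. rewrite Rminus_0_r. auto.
Qed.

Lemma abs_near (u g e : R) : Rabs (u - g) < e -> Rabs u <= Rabs g + e.
Proof.
  intros H. pose proof (Rabs_triang_inv u g). lra.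
Qed.

Lemma abs_near_lo (u g : R) : Rabs (u - g) < Rabs g / 2 -> Rabs g / 2 < Rabs u.
Proof.
  intros H. pose proof (Rabs_triang_inv g u). rewrite Rabs_minus_sym in H. lra.
Qed.

Lemma bound3 (A A' C C' D D' : R) : Rabs A <= A' -> Rabs C <= C' -> 0 < D' -> D' <= Rabs D ->
  Rabs A * Rabs C / D^2 <= A' * C' / D'^2.
Proof.
  intros h1 h2 h3 h4.
  assert (0 <= Rabs A) by apply Rabs_pos. assert (0 <= Rabs C) by apply Rabs_pos.
  assert (hD : D'^2 <= D^2).
  { rewrite <- pow2_abs with (x := D). apply pow_incr. lra. }
  assert (0 < D'^2) by (apply pow2_gt_0; lra).
  unfold Rdiv. apply Rmult_le_compat.
  - apply Rmult_le_pos; auto.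
  - left; apply Rinv_0_lt_compat. lra.
  - apply Rmult_le_compat; auto.
  - apply Rinv_le_contravar; auto.
Qed.

Lemma loc_H (a : R) (f : R -> R) (z : R) : 0 <= a -> real_analytic_on (fun x => a < x) f -> a < z ->
  exists d B, 0 < d /\ forall x, Rabs (x - z) < d -> Rabs (Hf f x) <= B.
Proof.
  intros Ha Han Hz.
  destruct (loc_ps a f z Han Hz) as [rho [c [Hrho [Hrad Hx]]]].
  destruct (Req_dec (c 0%nat) 0) as [Hc0|Hc0].
  - destruct (classic (exists n, c n <> 0)) as [Hex|Hno].
    + destruct (least_nz c Hex) as [m [Hm Hlt]].
      destruct m as [|j]; [contradiction|].
      set (a1 := PS_incr_1 (PS_derive c)).
      set (a2 := PS_incr_1 (PS_incr_1 (PS_derive (PS_derive c)))).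
      assert (R0 : Rbar_le rho (CV_radius (PS_decr_n c (S j)))) by (rewrite CV_radius_decr_n; auto).
      assert (R1 : Rbar_le rho (CV_radius (PS_decr_n a1 (S j)))).
      { rewrite CV_radius_decr_n. unfold a1. rewrite CV_radius_incr_1, CV_radius_derive; auto. }
      assert (R2 : Rbar_le rho (CV_radius (PS_decr_n a2 (S j)))).
      { rewrite CV_radius_decr_n. unfold a2. rewrite !CV_radius_incr_1, !CV_radius_derive; auto. }
      assert (V1 : forall k, (k < S j)%nat -> a1 k = 0).
      { intros k Hk. unfold a1. destruct k as [|k]; [reflexivity|]. simpl.
        unfold PS_derive. rewrite Hlt by lia. ring. }
      assert (V2 : forall k, (k < S j)%nat -> a2 k = 0).
      { intros k Hk. unfold a2. destruct k as [|k]; [reflexivity|]. destruct k as [|k]; [reflexivity|]. simpl.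
        unfold PS_derive. rewrite Hlt by lia. ring. }
      set (g0 := PS_decr_n c (S j) O). set (g1 := PS_decr_n a1 (S j) O). set (g2 := PS_decr_n a2 (S j) O).
      assert (Hg1 : g1 <> 0).
      { unfold g1, PS_decr_n. rewrite Nat.add_0_r. unfold a1. simpl. unfold PS_derive.
        apply Rmult_integral_contrapositive_currified; auto. apply not_0_INR. lia. }
      assert (Hg1p : 0 < Rabs g1 / 2) by (pose proof (Rabs_pos_lt _ Hg1); lra).
      destruct (ps_near _ _ 1 R0 Hrho Rlt_0_1) as [d0 [Hd0 N0]].
      destruct (ps_near _ _ _ R1 Hrho Hg1p) as [d1 [Hd1 N1]].
      destruct (ps_near _ _ 1 R2 Hrho Rlt_0_1) as [d2 [Hd2 N2]].
      exists (Rmin rho (Rmin d0 (Rmin d1 d2))), ((Rabs g0 + 1) * (Rabs g2 + 1) / (Rabs g1 / 2)^2).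
      split.
      { repeat apply Rmin_pos; auto. }
      intros x Hxz.
      assert (h1 : Rabs (x - z) < rho) by (eapply Rlt_le_trans; [exact Hxz| apply Rmin_l]).
      assert (h2 : Rabs (x - z) < d0) by (eapply Rlt_le_trans; [exact Hxz| eapply Rle_trans; [apply Rmin_r| apply Rmin_l]]).
      assert (h3 : Rabs (x - z) < d1) by (eapply Rlt_le_trans; [exact Hxz| eapply Rle_trans; [apply Rmin_r| eapply Rle_trans; [apply Rmin_r| apply Rmin_l]]]).
      assert (h4 : Rabs (x - z) < d2) by (eapply Rlt_le_trans; [exact Hxz| eapply Rle_trans; [apply Rmin_r| eapply Rle_trans; [apply Rmin_r| apply Rmin_r]]]).
      assert (HB : 0 <= (Rabs g0 + 1) * (Rabs g2 + 1) / (Rabs g1 / 2)^2).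
      { unfold Rdiv. apply Rmult_le_pos; [apply Rmult_le_pos; pose proof (Rabs_pos g0); pose proof (Rabs_pos g2); lra|].
        left. apply Rinv_0_lt_compat. apply pow2_gt_0. lra. }
      destruct (Hx x h1) as [Hax [Ef [Ed1 [Ed2 _]]]].
      destruct (Req_dec (f x) 0) as [Hf0|Hf0].
      { rewrite Hf_zero; auto. rewrite Rabs_R0. auto. }
      set (s := x - z) in *.
      assert (Hs : s <> 0).
      { intros E. apply Hf0. rewrite Ef, E, PSeries_0. auto. }
      specialize (N0 s h2). specialize (N1 s h3). specialize (N2 s h4).
      fold g0 in N0. fold g1 in N1. fold g2 in N2.
      set (G0 := PSeries (PS_decr_n c (S j)) s) in *.
      set (G1 := PSeries (PS_decr_n a1 (S j)) s) in *.
      set (G2 := PSeries (PS_decr_n a2 (S j)) s) in *.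
      assert (HG1 : Rabs g1 / 2 < Rabs G1) by (apply abs_near_lo; auto).
      assert (HG1' : G1 <> 0).
      { intros E. rewrite E, Rabs_R0 in HG1. lra. }
      unfold Hf, Hden.
      eapply Rle_trans.
      { apply (H_alg2 x s (s ^ S j) (f x) (Derive f x) (Derive_n f 2 x) G0 G1 G2); auto.
        - lra.
        - apply pow_nonzero; auto.
        - rewrite Ef. unfold G0. apply PSeries_decr_n_aux. auto.
        - rewrite Ed1. unfold G1. rewrite <- PSeries_decr_n_aux by auto.
          unfold a1. rewrite PSeries_incr_1. reflexivity.
        - rewrite Ed2. unfold G2. rewrite <- PSeries_decr_n_aux by auto.
          unfold a2. rewrite !PSeries_incr_1. ring. }
      apply bound3.
      * apply abs_near. auto.
      * apply abs_near. auto.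
      * auto.
      * lra.
    + exists rho, 0. split; auto. intros x Hxz.
      destruct (Hx x Hxz) as [Hax [Ef _]].
      rewrite Hf_zero. { rewrite Rabs_R0. lra. }
      rewrite Ef. rewrite (PSeries_ext c (fun _ => 0)). { apply PSeries_const_0. }
      intros n. apply NNPP. intros Hn. apply Hno. exists n. auto.
  - set (c2 := PS_derive (PS_derive c)).
    assert (R2 : Rbar_le rho (CV_radius c2)) by (unfold c2; rewrite !CV_radius_derive; auto).
    assert (Hc0p : 0 < Rabs (c 0%nat) / 2) by (pose proof (Rabs_pos_lt _ Hc0); lra).
    destruct (ps_near _ _ _ Hrad Hrho Hc0p) as [d0 [Hd0 N0]].
    destruct (ps_near _ _ 1 R2 Hrho Rlt_0_1) as [d2 [Hd2 N2]].
    exists (Rmin rho (Rmin d0 (Rmin d2 1))), ((Rabs z + 1)^2 * (Rabs (c2 O) + 1) / (Rabs (c 0%nat) / 2)).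
    split.
    { repeat apply Rmin_pos; auto. lra. }
    intros x Hxz.
    assert (h1 : Rabs (x - z) < rho) by (eapply Rlt_le_trans; [exact Hxz| apply Rmin_l]).
    assert (h2 : Rabs (x - z) < d0) by (eapply Rlt_le_trans; [exact Hxz| eapply Rle_trans; [apply Rmin_r| apply Rmin_l]]).
    assert (h3 : Rabs (x - z) < d2) by (eapply Rlt_le_trans; [exact Hxz| eapply Rle_trans; [apply Rmin_r| eapply Rle_trans; [apply Rmin_r| apply Rmin_l]]]).
    assert (h4 : Rabs (x - z) < 1) by (eapply Rlt_le_trans; [exact Hxz| eapply Rle_trans; [apply Rmin_r| eapply Rle_trans; [apply Rmin_r| apply Rmin_r]]]).
    destruct (Hx x h1) as [Hax [Ef [Ed1 [Ed2 _]]]].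
    specialize (N0 _ h2). specialize (N2 _ h3).
    rewrite <- Ef in N0. fold c2 in Ed2. rewrite <- Ed2 in N2.
    assert (HF : Rabs (c 0%nat) / 2 < Rabs (f x)) by (apply abs_near_lo; auto).
    assert (HF0 : f x <> 0) by (intros E; rewrite E, Rabs_R0 in HF; lra).
    unfold Hf, Hden. eapply Rle_trans; [apply H_alg1; auto|].
    assert (hx : x^2 <= (Rabs z + 1)^2).
    { rewrite <- pow2_abs with (x := x). apply pow_incr. split; [apply Rabs_pos|].
      replace x with ((x - z) + z) at 1 by ring. eapply Rle_trans; [apply Rabs_triang|]. lra. }
    assert (hF2 : Rabs (Derive_n f 2 x) <= Rabs (c2 O) + 1) by (apply abs_near; auto).
    unfold Rdiv. apply Rmult_le_compat.
    + apply Rmult_le_pos; [apply pow2_ge_0|apply Rabs_pos].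
    + left; apply Rinv_0_lt_compat; lra.
    + apply Rmult_le_compat; auto; [apply pow2_ge_0|apply Rabs_pos].
    + apply Rinv_le_contravar; lra.
Qed.

Lemma real_ind (P : R -> Prop) (T : R) : 0 <= T -> P 0 ->
  (forall t, 0 <= t < T -> (forall s, 0 <= s <= t -> P s) -> exists e, 0 < e /\ forall s, t < s <= t + e -> P s) ->
  (forall t, 0 < t <= T -> (forall s, 0 <= s < t -> P s) -> P t) ->
  forall t, 0 <= t <= T -> P t.
Proof.
  intros HT H0 Hop Hcl.
  set (E := fun t => 0 <= t <= T /\ forall s, 0 <= s <= t -> P s).
  assert (HE0 : E 0).
  { split; [lra|]. intros s Hs. replace s with 0 by lra. auto. }
  assert (Hb : bound E) by (exists T; intros t [Ht _]; lra).
  destruct (completeness E Hb (ex_intro _ 0 HE0)) as [m [Hub Hlub]].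
  assert (Hm0 : 0 <= m) by (apply Hub; auto).
  assert (HmT : m <= T) by (apply Hlub; intros t [Ht _]; lra).
  assert (Hbelow : forall s, 0 <= s < m -> P s).
  { intros s Hs. apply NNPP. intros Hn.
    assert (m <= s).
    { apply Hlub. intros t [Ht Hts]. destruct (Rle_dec t s) as [h|h]; auto.
      exfalso. apply Hn. apply Hts. lra. }
    lra. }
  assert (HPm : P m).
  { destruct (Req_dec m 0) as [->|Hne]; auto. apply Hcl; auto. lra. }
  assert (HEm : E m).
  { split; [lra|]. intros s Hs. destruct (Req_dec s m) as [->|Hne]; auto. apply Hbelow. lra. }
  assert (HmT' : m = T).
  { destruct (Req_dec m T) as [h|h]; auto.
    destruct (Hop m) as [e [He Hp]]; [lra| apply HEm |].
    assert (E (Rmin (m + e) T)).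
    { split. { split; [apply Rmin_glb; lra| apply Rmin_r]. }
      intros s Hs. destruct (Rle_dec s m) as [h'|h'].
      - apply HEm. lra.
      - apply Hp. split; [lra|]. eapply Rle_trans; [apply Hs| apply Rmin_l]. }
    assert (Rmin (m + e) T <= m) by (apply Hub; auto).
    assert (m < Rmin (m + e) T) by (apply Rmin_glb_lt; lra). lra. }
  intros t Ht. apply HEm. subst m. lra.
Qed.

Lemma mid_H (a : R) (f : R -> R) (lo hi : R) : 0 <= a -> real_analytic_on (fun x => a < x) f -> a < lo -> lo <= hi ->
  exists B, forall x, lo <= x <= hi -> Rabs (Hf f x) <= B.
Proof.
  intros Ha Han Hlo Hhi.
  set (P := fun t => exists B, forall x, lo <= x <= lo + t -> Rabs (Hf f x) <= B).
  assert (HP : forall t, 0 <= t <= hi - lo -> P t).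
  { apply real_ind; [lra| | |].
    - destruct (loc_H a f lo Ha Han Hlo) as [d [B [Hd HB]]].
      exists B. intros x Hx. apply HB. replace (x - lo) with 0 by lra. rewrite Rabs_R0. auto.
    - intros t Ht Hall. destruct (Hall t) as [B0 HB0]; [lra|].
      destruct (loc_H a f (lo + t) Ha Han ltac:(lra)) as [d [B1 [Hd HB1]]].
      exists (d/2). split; [lra|]. intros s Hs. exists (Rmax B0 B1). intros x Hx.
      destruct (Rle_dec x (lo + t)) as [h|h].
      + eapply Rle_trans; [apply HB0; lra| apply Rmax_l].
      + eapply Rle_trans; [apply HB1| apply Rmax_r]. apply Rabs_def1; lra.
    - intros t Ht Hall.
      destruct (loc_H a f (lo + t) Ha Han ltac:(lra)) as [d [B1 [Hd HB1]]].
      set (t' := Rmax 0 (t - d/2)).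
      assert (Ht' : 0 <= t' < t) by (unfold t'; split; [apply Rmax_l| apply Rmax_lub_lt; lra]).
      destruct (Hall t' Ht') as [B0 HB0].
      exists (Rmax B0 B1). intros x Hx.
      destruct (Rle_dec x (lo + t')) as [h|h].
      + eapply Rle_trans; [apply HB0; lra| apply Rmax_l].
      + eapply Rle_trans; [apply HB1| apply Rmax_r].
        assert (t - d/2 <= t') by apply Rmax_r. apply Rabs_def1; lra. }
  destruct (HP (hi - lo)) as [B HB]; [lra|].
  exists B. intros x Hx. apply HB. lra.
Qed.

Lemma global_H (a : R) (f : R -> R) : 0 < a -> real_analytic_on (fun x => a < x) f ->
  (exists C, 0 < C /\
     (forall eps, 0 < eps -> exists d, 0 < d /\
        forall x, a < x < a + d -> Hden f x <> 0 -> Rabs (Hf f x) <= C + eps) /\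
     (forall eps, 0 < eps -> exists M, forall x, M < x -> a < x ->
        Hden f x <> 0 -> Rabs (Hf f x) <= C + eps)) ->
  exists B, 0 <= B /\ forall x, a < x -> Rabs (Hf f x) <= B.
Proof.
  intros Ha Han [C [HC [Hnear Hfar]]].
  destruct (Hnear 1 Rlt_0_1) as [d [Hd Hd']].
  destruct (Hfar 1 Rlt_0_1) as [M HM].
  destruct (mid_H a f (a + d/2) (Rmax (a + d) M + 1) ltac:(lra) Han ltac:(lra)) as [B0 HB0].
  { pose proof (Rmax_l (a + d) M). lra. }
  assert (Hz : forall x, Hden f x = 0 -> Hf f x = 0).
  { intros x Hx. apply Hf_zero. unfold Hden in Hx.
    assert (0 <= f x ^2) by apply pow2_ge_0.
    assert (0 <= x^2 * Derive f x ^2) by (apply Rmult_le_pos; apply pow2_ge_0).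
    assert (f x ^ 2 = 0) by lra. apply NNPP; intros Hn; apply (pow_nonzero (f x) 2 Hn); auto. }
  exists (Rmax (Rmax B0 0) (C + 1)). split.
  { eapply Rle_trans; [apply Rmax_r|apply Rmax_l]. }
  intros x Hx.
  destruct (Req_dec (Hden f x) 0) as [H0|H0].
  { rewrite Hz, Rabs_R0 by auto. eapply Rle_trans; [apply Rmax_r|apply Rmax_l]. }
  destruct (Rlt_dec x (a + d)) as [h1|h1].
  { eapply Rle_trans; [apply Hd'; auto; lra| apply Rmax_r]. }
  destruct (Rlt_dec M x) as [h2|h2].
  { eapply Rle_trans; [apply HM; auto| apply Rmax_r]. }
  eapply Rle_trans; [apply HB0| eapply Rle_trans; [apply Rmax_l| apply Rmax_l]].
  pose proof (Rmax_r (a + d) M). lra.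
Qed.

Definition wf (f : R -> R) (t : R) : R := f t / sqrt (f t ^ 2 + t^2 * Derive f t ^ 2).

Lemma Hden_pos (f : R -> R) (s : R) : f s <> 0 -> 0 < f s ^ 2 + s^2 * Derive f s ^ 2.
Proof.
  intros H. assert (0 < f s ^2) by (apply pow2_gt_0; auto).
  assert (0 <= s^2 * Derive f s ^2) by (apply Rmult_le_pos; apply pow2_ge_0). lra.
Qed.

Lemma alg_bound (al be H : R) : al^2 + be^2 = 1 -> Rabs (al^3 - be*al^2 - al*H) <= 2 + Rabs H.
Proof.
  intros E.
  assert (ha : Rabs al <= 1).
  { apply Rabs_le. assert (0 <= be^2) by apply pow2_ge_0. nra. }
  assert (hb : Rabs be <= 1).
  { apply Rabs_le. assert (0 <= al^2) by apply pow2_ge_0. nra. }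
  replace (al^3 - be*al^2 - al*H) with (al^2 * (al - be) + (- (al * H))) by ring.
  eapply Rle_trans; [apply Rabs_triang|]. rewrite Rabs_Ropp, !Rabs_mult.
  rewrite (Rabs_pos_eq (al^2)) by apply pow2_ge_0.
  assert (h1 : Rabs (al - be) <= 2).
  { unfold Rminus. eapply Rle_trans; [apply Rabs_triang|]. rewrite Rabs_Ropp. lra. }
  assert (h2 : al^2 <= 1) by (assert (0 <= be^2) by apply pow2_ge_0; lra).
  assert (0 <= Rabs H) by apply Rabs_pos.
  assert (0 <= Rabs (al - be)) by apply Rabs_pos.
  assert (0 <= al^2) by apply pow2_ge_0.
  assert (0 <= Rabs al) by apply Rabs_pos.
  nra.
Qed.

Lemma w_deriv (f : R -> R) (s : R) : f s <> 0 ->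
  is_derive f s (Derive f s) -> is_derive (Derive f) s (Derive_n f 2 s) ->
  exists l, is_derive (wf f) s l /\ Rabs (s * l) <= 2 + Rabs (Hf f s).
Proof.
  intros Hf0 D1 D2.
  set (F := f s). set (F1 := Derive f s). set (F2 := Derive_n f 2 s).
  pose proof (Hden_pos f s Hf0) as HD. fold F F1 in HD.
  set (r := sqrt (F^2 + s^2*F1^2)).
  assert (Hr : 0 < r) by (apply sqrt_lt_R0; auto).
  assert (Hr2 : r * r = F^2 + s^2*F1^2) by (apply sqrt_sqrt; lra).
  exists (F1 / r - F * (F*F1 + s*F1^2 + s^2*F1*F2) / (r*r*r)).
  split.
  - unfold wf. auto_derive.
    + repeat split; try (eexists; eassumption).
      * change (0 < F^2 + s^2*F1^2) in HD. replace (f s * (f s * 1) + s * (s * 1) * (Derive f s * (Derive f s * 1))) with (F^2 + s^2*F1^2) by (unfold F, F1; ring). auto.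
      * replace (f s * (f s * 1) + s * (s * 1) * (Derive f s * (Derive f s * 1))) with (F^2 + s^2*F1^2) by (unfold F, F1; ring). fold r. lra.
    + change (Derive (fun x => f x) s) with F1.
      change (Derive (fun x => Derive f x) s) with F2.
      fold F F1.
      replace (F * (F * 1) + s * (s * 1) * (F1 * (F1 * 1))) with (F^2 + s^2*F1^2) by ring.
      fold r. field. lra.
  - assert (EH : Hf f s = s^2*F*F2/(r*r)).
    { unfold Hf, Hden. rewrite Hr2. reflexivity. }
    assert (E : s*F1/r = s*F1*(F^2 + s^2*F1^2)/(r*r*r)).
    { rewrite <- Hr2. field. lra. }
    replace (s * (F1 / r - F * (F*F1 + s*F1^2 + s^2*F1*F2) / (r*r*r)))
      with (s*F1/r - s*F * (F*F1 + s*F1^2 + s^2*F1*F2) / (r*r*r)) by (field; lra).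
    rewrite E.
    replace (s * F1 * (F ^ 2 + s ^ 2 * F1 ^ 2) / (r * r * r) - s * F * (F * F1 + s * F1 ^ 2 + s ^ 2 * F1 * F2) / (r * r * r))
      with ((s*F1/r)^3 - (F/r)*(s*F1/r)^2 - (s*F1/r)*(s^2*F*F2/(r*r))) by (field; lra).
    rewrite EH. apply alg_bound.
    replace ((s * F1 / r) ^ 2 + (F / r) ^ 2) with ((F^2 + s^2*F1^2)/(r*r)) by (field; lra).
    rewrite <- Hr2. field. lra.
Qed.

Lemma cont_of_derive (g : R -> R) (t l : R) : is_derive g t l -> continuity_pt g t.
Proof.
  intros H. apply continuity_pt_filterlim. apply (ex_derive_continuous g t). exists l. exact H.
Qed.

Lemma mvt_bound (g dg : R -> R) (s0 L : R) : 0 <= s0 ->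
  (forall t, 0 <= t <= s0 -> is_derive g t (dg t) /\ Rabs (dg t) <= L) ->
  Rabs (g s0 - g 0) <= L * s0.
Proof.
  intros Hs H.
  destruct (MVT_gen g 0 s0 dg) as [c [Hc E]].
  - intros x Hx. rewrite Rmin_left in Hx by lra. rewrite Rmax_right in Hx by lra. apply H. lra.
  - intros x Hx. rewrite Rmin_left in Hx by lra. rewrite Rmax_right in Hx by lra.
    apply (cont_of_derive g x (dg x)). apply H. lra.
  - rewrite Rmin_left in Hc by lra. rewrite Rmax_right in Hc by lra.
    rewrite E. rewrite Rabs_mult. rewrite (Rabs_pos_eq (s0 - 0)) by lra.
    replace (s0 - 0) with s0 by ring. apply Rmult_le_compat_r; [lra|]. apply H. lra.
Qed.

Lemma my_closed_ge (g : R -> R) (t eps : R) : continuity_pt g t -> 0 < t ->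
  (forall s, 0 <= s < t -> eps <= g s) -> eps <= g t.
Proof.
  intros Hc Ht H. apply Rnot_lt_le. intros Hlt.
  destruct (cont_eps g t (eps - g t) Hc ltac:(lra)) as [d [Hd Hd']].
  set (s := Rmax 0 (t - d/2)).
  assert (Hs : 0 <= s < t) by (unfold s; split; [apply Rmax_l| apply Rmax_lub_lt; lra]).
  assert (t - d/2 <= s) by apply Rmax_r.
  specialize (Hd' s ltac:(apply Rabs_def1; lra)). specialize (H s Hs).
  apply Rabs_def2 in Hd'. lra.
Qed.

Lemma open_nz (g : R -> R) (t : R) : continuity_pt g t -> g t <> 0 ->
  exists e, 0 < e /\ forall s, Rabs (s - t) < e -> g s <> 0.
Proof.
  intros Hc Hg. destruct (cont_eps g t (Rabs (g t)) Hc (Rabs_pos_lt _ Hg)) as [d [Hd H]].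
  exists d. split; auto. intros s Hs E. specialize (H s Hs). rewrite E in H.
  rewrite Rminus_0_l, Rabs_Ropp in H. lra.
Qed.

Lemma exp_le' (x y : R) : x <= y -> exp x <= exp y.
Proof. intros H. destruct (Rle_lt_or_eq_dec _ _ H) as [h|h]; [left; apply exp_increasing; auto| subst; lra]. Qed.

Lemma derivs_at (a : R) (f : R -> R) (s : R) : real_analytic_on (fun x => a < x) f -> a < s ->
  is_derive f s (Derive f s) /\ is_derive (Derive f) s (Derive_n f 2 s).
Proof.
  intros Han Hs. destruct (loc_ps a f s Han Hs) as [rho [c [Hrho [_ Hx]]]].
  destruct (Hx s) as [_ [_ [_ [_ [H1 H2]]]]]. { rewrite Rminus_diag, Rabs_R0. auto. }
  auto.
Qed.

Lemma ln_sq_derive (G : R -> R) (t d : R) : is_derive G t d -> G t <> 0 ->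
  is_derive (fun u => ln (G u ^ 2)) t (2 * d / G t).
Proof.
  intros H HG.
  assert (HG2 : 0 < G t * (G t * 1)) by (rewrite Rmult_1_r; apply Rsqr_pos_lt; auto).
  auto_derive.
  - repeat split; auto. exists d; auto.
  - change (Derive (fun x => G x) t) with (Derive G t). rewrite (is_derive_unique _ _ _ H). field. auto.
Qed.

Lemma ratio_bound (F A v : R) : F <> 0 -> 0 < v -> v/2 <= Rabs (F / sqrt (F^2 + A^2)) ->
  Rabs (A / F) <= 2 / v.
Proof.
  intros HF Hv H.
  assert (HD : 0 < F^2 + A^2) by (assert (0 < F^2) by (apply pow2_gt_0; auto); assert (0 <= A^2) by apply pow2_ge_0; lra).
  set (r := sqrt (F^2 + A^2)) in *.
  assert (Hr : 0 < r) by (apply sqrt_lt_R0; auto).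
  assert (Hr2 : r * r = F^2 + A^2) by (apply sqrt_sqrt; lra).
  unfold Rdiv in H. rewrite Rabs_mult, Rabs_inv, (Rabs_pos_eq r) in H by lra.
  assert (H1 : v * r <= 2 * Rabs F).
  { apply (Rmult_le_compat_r r) in H; [|lra]. replace (Rabs F * / r * r) with (Rabs F) in H by (field; lra). lra. }
  assert (HaF : 0 < Rabs F) by (apply Rabs_pos_lt; auto).
  assert (H2 : v * Rabs A <= 2 * Rabs F).
  { assert (Rabs A <= r).
    { apply Rsqr_incr_0_var; [|lra]. unfold Rsqr. rewrite Hr2. rewrite <- Rabs_mult.
      rewrite Rabs_pos_eq by nra. nra. }
    nra. }
  unfold Rdiv. rewrite Rabs_mult, Rabs_inv.
  apply (Rmult_le_reg_r (Rabs F)); auto.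
  rewrite Rmult_assoc, Rinv_l by lra.
  apply (Rmult_le_reg_l v); auto. field_simplify; lra.
Qed.

Lemma KL (a : R) (f : R -> R) (B : R) : 0 < a -> real_analytic_on (fun x => a < x) f -> 0 <= B ->
  (forall x, a < x -> Rabs (Hf f x) <= B) ->
  forall x y, a < x -> f x <> 0 -> a < y ->
  Rabs (ln y - ln x) <= Rabs (wf f x) / (2 * (2 + B)) ->
  f y <> 0 /\ Rabs (wf f x) / 2 <= Rabs (wf f y).
Proof.
  intros Ha Han HB HHB x y Hx Hfx Hy HT.
  set (K := 2 + B) in *.
  assert (HK : 0 < K) by (unfold K; lra).
  set (v := Rabs (wf f x)) in *.
  assert (Hv : 0 < v).
  { unfold v. apply Rabs_pos_lt. unfold wf. unfold Rdiv. apply Rmult_integral_contrapositive_currified; auto.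
    apply Rinv_neq_0_compat. apply Rgt_not_eq. apply sqrt_lt_R0. apply Hden_pos. auto. }
  set (T := Rabs (ln y - ln x)) in *.
  assert (HT0 : 0 <= T) by apply Rabs_pos.
  assert (HKT : K * T <= v / 2).
  { apply (Rmult_le_compat_l K) in HT; [|lra]. replace (K * (v / (2 * K))) with (v/2) in HT by (field; lra). lra. }
  assert (Hsig : exists sg, (sg = 1 \/ sg = -1) /\ sg * T = ln y - ln x).
  { unfold T. destruct (Rle_dec (ln x) (ln y)) as [h|h].
    - exists 1. split; auto. rewrite Rabs_pos_eq by lra. ring.
    - exists (-1). split; auto. rewrite Rabs_left by lra. ring. }
  destruct Hsig as [sg [Hsg HsgT]].
  set (p := fun t => x * exp (sg * t)).
  assert (Hp0 : p 0 = x) by (unfold p; rewrite Rmult_0_r, exp_0; ring).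
  assert (HpT : p T = y).
  { unfold p. rewrite HsgT. unfold Rminus. rewrite exp_plus, exp_Ropp, !exp_ln by lra. field. lra. }
  assert (Hpa : forall t, 0 <= t <= T -> a < p t).
  { intros t Ht. destruct Hsg as [->| ->].
    - unfold p. assert (1 <= exp (1 * t)) by (pose proof (exp_ineq1_le (1 * t)); lra). assert (0 < x) by lra. nra.
    - rewrite <- HpT in Hy. unfold p in *. assert (exp (-1 * T) <= exp (-1 * t)) by (apply exp_le'; lra).
      assert (0 < x) by lra. nra. }
  assert (Hpd : forall t, is_derive p t (sg * p t)).
  { intros t. unfold p. auto_derive; auto. ring. }
  assert (Hsg1 : Rabs sg = 1) by (destruct Hsg as [->| ->]; [rewrite Rabs_pos_eq; lra| rewrite Rabs_left; lra]).
  assert (Hfp : forall t, 0 <= t <= T -> is_derive (fun u => f (p u)) t (sg * p t * Derive f (p t))).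
  { intros t Ht. destruct (derivs_at a f (p t) Han (Hpa t Ht)) as [D1 _].
    pose proof (is_derive_comp f p t _ _ D1 (Hpd t)) as H. exact H. }
  set (W := fun t => wf f (p t)).
  assert (HWd : forall t, 0 <= t <= T -> f (p t) <> 0 -> is_derive W t (Derive W t) /\ Rabs (Derive W t) <= K).
  { intros t Ht Hn. destruct (derivs_at a f (p t) Han (Hpa t Ht)) as [D1 D2].
    destruct (w_deriv f (p t) Hn D1 D2) as [l [Hl Hlb]].
    pose proof (is_derive_comp (wf f) p t _ _ Hl (Hpd t)) as H.
    change (is_derive W t (scal (sg * p t) l)) in H.
    rewrite (is_derive_unique _ _ _ H). split; auto.
    change (Rabs (sg * p t * l) <= K).
    rewrite Rmult_assoc, Rabs_mult, Hsg1, Rmult_1_l.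
    eapply Rle_trans; [exact Hlb|]. unfold K. specialize (HHB (p t) (Hpa t Ht)). lra. }
  assert (Cw : forall s0, 0 <= s0 <= T -> (forall t, 0 <= t <= s0 -> f (p t) <> 0) ->
                 Rabs (W s0 - W 0) <= K * s0).
  { intros s0 Hs0 Hall. apply (mvt_bound W (Derive W)); [lra|].
    intros t Ht. apply HWd; [lra|]. apply Hall; auto. }
  assert (HW0 : Rabs (W 0) = v) by (unfold W; rewrite Hp0; reflexivity).
  set (L := fun t => ln (f (p t) ^ 2)).
  assert (HLd : forall t, 0 <= t <= T -> f (p t) <> 0 -> v / 2 <= Rabs (W t) ->
             is_derive L t (Derive L t) /\ Rabs (Derive L t) <= 4 / v).
  { intros t Ht Hn Hw.
    pose proof (ln_sq_derive _ _ _ (Hfp t Ht) Hn) as H.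
    change (is_derive L t (2 * (sg * p t * Derive f (p t)) / f (p t))) in H.
    rewrite (is_derive_unique _ _ _ H). split; auto.
    assert (Hr : Rabs (p t * Derive f (p t) / f (p t)) <= 2 / v).
    { apply ratio_bound; auto. unfold W, wf in Hw.
      replace ((p t * Derive f (p t))^2) with (p t ^ 2 * Derive f (p t) ^ 2) by ring. exact Hw. }
    replace (2 * (sg * p t * Derive f (p t)) / f (p t)) with (2 * sg * (p t * Derive f (p t) / f (p t))) by (field; auto).
    rewrite !Rabs_mult, Hsg1, Rabs_pos_eq by lra. lra. }
  assert (Hcont : forall t, 0 <= t <= T -> continuity_pt (fun u => f (p u)) t).
  { intros t Ht. eapply cont_of_derive. apply Hfp; auto. }
  assert (HP : forall t, 0 <= t <= T -> f (p t) <> 0).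
  { apply real_ind; auto.
    - rewrite Hp0. auto.
    - intros t Ht Hall.
      destruct (open_nz _ t (Hcont t ltac:(lra)) (Hall t ltac:(lra))) as [e [He He']].
      exists (e/2). split; [lra|]. intros s Hs. apply He'. apply Rabs_def1; lra.
    - intros t Ht Hall.
      set (eps := exp (L 0 - 4 / v * T)).
      assert (Heps : 0 < eps) by apply exp_pos.
      assert (Hlow : forall s, 0 <= s < t -> eps <= f (p s) * f (p s)).
      { intros s Hs.
        assert (Hall' : forall u, 0 <= u <= s -> f (p u) <> 0) by (intros u Hu; apply Hall; lra).
        assert (Hw : forall u, 0 <= u <= s -> v / 2 <= Rabs (W u)).
        { intros u Hu. pose proof (Cw u ltac:(lra) ltac:(intros; apply Hall'; lra)) as C.
          pose proof (Rabs_triang_inv (W 0) (W u)) as Tr. rewrite Rabs_minus_sym in C.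
          rewrite HW0 in Tr. assert (K * u <= K * T) by (apply Rmult_le_compat_l; lra). lra. }
        assert (CL : Rabs (L s - L 0) <= 4 / v * s).
        { apply (mvt_bound L (Derive L)); [lra|]. intros u Hu. apply HLd; [lra| apply Hall'; auto| apply Hw; auto]. }
        assert (Hls : L 0 - 4 / v * T <= L s).
        { apply Rabs_le_between in CL. assert (4 / v * s <= 4 / v * T) by (apply Rmult_le_compat_l; [unfold Rdiv; apply Rmult_le_pos; [lra| left; apply Rinv_0_lt_compat; auto]| lra]). lra. }
        unfold eps. apply exp_le' in Hls. unfold L in Hls at 2. rewrite exp_ln in Hls.
        + simpl in Hls. rewrite Rmult_1_r in Hls. exact Hls.
        + apply pow2_gt_0. apply Hall'. lra. }
      assert (Hct : continuity_pt (fun u => f (p u) * f (p u)) t).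
      { apply continuity_pt_mult; apply Hcont; lra. }
      pose proof (my_closed_ge _ t eps Hct ltac:(lra) Hlow) as Hge.
      simpl in Hge. intros E. rewrite E in Hge. lra. }
  split.
  - rewrite <- HpT. apply HP. lra.
  - pose proof (Cw T ltac:(lra) HP) as C.
    unfold W in C. rewrite HpT, Hp0 in C. fold v in C.
    pose proof (Rabs_triang_inv (wf f x) (wf f y)) as Tr. rewrite Rabs_minus_sym in C. fold v in Tr. lra.
Qed.

Lemma kappa_fin (f : R -> R) (y : R) : 0 < y -> f y <> 0 ->
  kappa f y = Finite (Rabs y * Rabs (Derive f y) / Rabs (f y)).
Proof.
  intros Hy Hf. unfold kappa.
  destruct (Req_EM_T y 0) as [h|h]; [lra|].
  destruct (Req_EM_T (f y) 0) as [h'|h']; [contradiction|]. reflexivity.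
Qed.

Lemma rdist_lt (x y e : R) : 0 < x -> Rbar_lt (rdist y x) (Finite e) ->
  0 < y /\ Rabs (ln y - ln x) < e.
Proof.
  intros Hx H. unfold rdist in H.
  destruct (Req_EM_T y 0) as [h|h].
  - destruct (Req_EM_T x 0) as [h'|h']; [lra| simpl in H; contradiction].
  - destruct (Rlt_dec 0 (y * x)) as [h'|h']; [|simpl in H; contradiction].
    assert (Hy : 0 < y).
    { destruct (Rlt_le_dec 0 y) as [q|q]; auto. nra. }
    split; auto. simpl in H.
    unfold Rdiv in H. rewrite ln_mult, ln_Rinv in H by (try apply Rinv_0_lt_compat; lra).
    rewrite Rabs_minus_sym. replace (ln x - ln y) with (ln x + - ln y) by ring. exact H.
Qed.

Lemma v_ge (F F1 x : R) : F <> 0 ->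
  1 / (1 + Rabs x * Rabs F1 / Rabs F) <= Rabs (F / sqrt (F^2 + x^2 * F1^2)).
Proof.
  intros HF.
  assert (HaF : 0 < Rabs F) by (apply Rabs_pos_lt; auto).
  assert (HD : 0 < F^2 + x^2*F1^2) by (assert (0 < F^2) by (apply pow2_gt_0; auto); assert (0 <= x^2*F1^2) by (apply Rmult_le_pos; apply pow2_ge_0); lra).
  set (r := sqrt (F^2 + x^2*F1^2)).
  assert (Hr : 0 < r) by (apply sqrt_lt_R0; auto).
  assert (Hr2 : r * r = F^2 + x^2*F1^2) by (apply sqrt_sqrt; lra).
  set (A := Rabs x * Rabs F1).
  assert (HA : 0 <= A) by (apply Rmult_le_pos; apply Rabs_pos).
  assert (HrA : r <= Rabs F + A).
  { apply Rsqr_incr_0_var; [|lra]. unfold Rsqr. rewrite Hr2.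
    replace (F^2 + x^2*F1^2) with (Rabs F * Rabs F + A * A).
    - nra.
    - unfold A. rewrite <- !Rabs_mult. rewrite !Rabs_pos_eq by (try apply Rle_0_sqr; nra). ring. }
  replace (1 / (1 + A / Rabs F)) with (Rabs F / (Rabs F + A)) by (field; lra).
  unfold Rdiv. rewrite Rabs_mult, Rabs_inv, (Rabs_pos_eq r) by lra.
  apply Rmult_le_compat_l; [lra|]. apply Rinv_le_contravar; lra.
Qed.

Theorem proposition2 (a : R) (f : R -> R) :
  0 < a ->
  real_analytic_on (fun x => a < x) f ->
  (exists x, a < x /\ f x <> 0) ->
  (forall M, exists d, 0 < d /\
     forall x, a < x < a + d -> Rbar_lt (Finite M) (kappa f x)) ->
  (forall u : nat -> R,
     (forall j, a < u j) ->
     is_lim_seq u p_infty ->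
     (forall eps, 0 < eps -> exists N, forall j, (N <= j)%nat ->
        rdist_set_lt (u j) (fun s => a < s /\ f s = 0) eps) ->
     forall M, exists N, forall j, (N <= j)%nat -> Rbar_lt (Finite M) (kappa f (u j))) ->
  (exists C, 0 < C /\
     (forall eps, 0 < eps -> exists d, 0 < d /\
        forall x, a < x < a + d -> Hden f x <> 0 -> Rabs (Hf f x) <= C + eps) /\
     (forall eps, 0 < eps -> exists M, forall x, M < x -> a < x ->
        Hden f x <> 0 -> Rabs (Hf f x) <= C + eps)) ->
  amenable (fun x => a < x) f.
Proof.
  intros Ha Han _ H1a _ H2.
  destruct (global_H a f Ha Han H2) as [B [HB HHB]].
  set (K := 2 + B).
  assert (HK : 0 < K) by (unfold K; lra).
  exists (2 * K + 3). split; [lra|].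
  intros x k Hx Hk.
  assert (Hfx : f x <> 0).
  { intros E. unfold kappa in Hk. destruct (Req_EM_T x 0); [lra|].
    destruct (Req_EM_T (f x) 0) as [_|nn]; [discriminate| contradiction]. }
  rewrite kappa_fin in Hk by (auto; lra). injection Hk as Hk.
  assert (Hk0 : 0 <= k).
  { rewrite <- Hk. unfold Rdiv. apply Rmult_le_pos; [apply Rmult_le_pos; apply Rabs_pos|].
    left. apply Rinv_0_lt_compat. apply Rabs_pos_lt; auto. }
  set (v := Rabs (wf f x)).
  assert (Hv : 1 / (1 + k) <= v).
  { unfold v, wf. rewrite <- Hk. apply v_ge. auto. }
  assert (Hv0 : 0 < v) by (eapply Rlt_le_trans; [|exact Hv]; apply Rdiv_lt_0_compat; lra).
  assert (Hrad : 1 / ((2 * K + 3) * (1 + k)) <= v / (2 * K)).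
  { apply (Rmult_le_reg_l (2*K)); [lra|].
    replace (2 * K * (v / (2 * K))) with v by (field; lra).
    assert (E : 2*K*(1/((2*K+3)*(1+k))) = (2*K/(2*K+3)) * (1/(1+k))) by (field; lra).
    rewrite E. eapply Rle_trans; [|exact Hv].
    assert (0 < 3/(2*K+3)) by (apply Rdiv_lt_0_compat; lra).
    assert (E2 : 2*K/(2*K+3) = 1 - 3/(2*K+3)) by (field; lra).
    assert (0 < 1/(1+k)) by (apply Rdiv_lt_0_compat; lra).
    rewrite E2. nra. }
  assert (Hdom : v / (2 * K) <= ln x - ln a).
  { apply Rnot_lt_le. intros Hlt.
    destruct (H1a (2 / v)) as [d [Hd Hd']].
    set (s := Rmin x (a + d/2)).
    assert (Hs1 : a < s) by (unfold s; apply Rmin_glb_lt; lra).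
    assert (Hs2 : s <= x) by apply Rmin_l.
    assert (Hs3 : s < a + d) by (unfold s; eapply Rle_lt_trans; [apply Rmin_r| lra]).
    assert (Hls : ln a < ln s) by (apply ln_increasing; lra).
    assert (Hls2 : ln s <= ln x).
    { destruct (Rle_lt_or_eq_dec _ _ Hs2) as [q|q]; [left; apply ln_increasing; lra| rewrite q; lra]. }
    destruct (KL a f B Ha Han HB HHB x s Hx Hfx Hs1) as [Hfs Hws].
    { rewrite Rabs_left1 by lra. fold K. fold v. lra. }
    specialize (Hd' s ltac:(lra)). rewrite kappa_fin in Hd' by (auto; lra). simpl in Hd'.
    assert (Hr : Rabs (s * Derive f s / f s) <= 2 / v).
    { apply ratio_bound; auto. unfold wf in Hws. fold v in Hws.
      replace ((s * Derive f s)^2) with (s ^ 2 * Derive f s ^ 2) by ring. exact Hws. }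
    unfold Rdiv in Hr. rewrite !Rabs_mult, Rabs_inv in Hr. unfold Rdiv in Hd'. lra. }
  assert (Hdomy : forall y, Rbar_lt (rdist y x) (Finite (1 / ((2 * K + 3) * (1 + k)))) -> a < y /\ Rabs (ln y - ln x) <= v / (2 * K)).
  { intros y Hy. destruct (rdist_lt x y _ ltac:(lra) Hy) as [Hy0 Hly].
    split; [|lra].
    apply Rnot_le_lt. intros Hya.
    assert (ln y <= ln a).
    { destruct (Rle_lt_or_eq_dec _ _ Hya) as [q|q]; [left; apply ln_increasing; lra| rewrite q; lra]. }
    apply Rabs_def2 in Hly. lra. }
  split.
  - intros y Hy. apply (Hdomy y Hy).
  - intros y Hy. destruct (Hdomy y Hy) as [Hay Hly].
    destruct (KL a f B Ha Han HB HHB x y Hx Hfx Hay) as [Hfy Hwy].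
    { fold K. fold v. exact Hly. }
    fold v in Hwy.
    unfold mu. rewrite kappa_fin by (auto; lra). simpl.
    assert (Hr : Rabs (y * Derive f y / f y) <= 2 / v).
    { apply ratio_bound; auto. unfold wf in Hwy.
      replace ((y * Derive f y)^2) with (y ^ 2 * Derive f y ^ 2) by ring. exact Hwy. }
    unfold Rdiv in Hr. rewrite !Rabs_mult, Rabs_inv in Hr.
    assert (H2v : 2 / v <= 2 * (1 + k)).
    { apply (Rmult_le_reg_r v); auto. replace (2 / v * v) with 2 by (field; lra).
      apply (Rmult_le_compat_l (2 * (1+k))) in Hv; [|lra].
      replace (2 * (1 + k) * (1 / (1 + k))) with 2 in Hv by (field; lra). lra. }
    unfold Rdiv. nra.
Qed.
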